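(* Let $d:\mathbb{Z}\to\mathbb{C}$ be bounded and $(Ju)(n)=u(n-1)+d(n)u(n)+u(n+1)$ on $\ell^2(\mathbb{Z})$. Suppose there are $b_1\ne b_2$ in $\mathbb{R}$ such that $(\Im(d(n)))_{n\in\mathbb{Z}}$ alternates between $b_1$ and $b_2$, i.e. $\Im(d(n))=b_1$ for all even $n$ and $\Im(d(n))=b_2$ for all odd $n$. Then $J$ has no boundary eigenvalues.
   Context: The numerical range is $\operatorname{Num}(J)=\{\langle Ju,u\rangle:\|u\|=1\}$, and a boundary eigenvalue of $J$ is an eigenvalue of $J$ lying in the topological boundary of $\operatorname{Num}(J)$. *)

(* Defs.v *)
From Stdlib Require Import Reals ZArith.
Open Scope R_scope.

Record Cx := mkC { Re : R; Im : R }.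

Definition Cadd (z w : Cx) : Cx := mkC (Re z + Re w) (Im z + Im w).
Definition Csub (z w : Cx) : Cx := mkC (Re z - Re w) (Im z - Im w).
Definition Cmul (z w : Cx) : Cx :=
  mkC (Re z * Re w - Im z * Im w) (Re z * Im w + Im z * Re w).
Definition Cconj (z : Cx) : Cx := mkC (Re z) (- Im z).
Definition Cnorm2 (z : Cx) : R := Re z ^ 2 + Im z ^ 2.
Definition Cnorm (z : Cx) : R := sqrt (Cnorm2 z).
Definition C0 : Cx := mkC 0 0.

Definition sumZ (f : Z -> R) (l : R) : Prop :=
  exists l1 l2,
    infinite_sum (fun k => f (Z.of_nat k)) l1 /\
    infinite_sum (fun k => f (- Z.of_nat (S k))%Z) l2 /\
    l = l1 + l2.

Definition CsumZ (f : Z -> Cx) (l : Cx) : Prop :=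
  sumZ (fun n => Re (f n)) (Re l) /\ sumZ (fun n => Im (f n)) (Im l).

Definition l2_norm2 (u : Z -> Cx) (s : R) : Prop := sumZ (fun n => Cnorm2 (u n)) s.
Definition in_l2 (u : Z -> Cx) : Prop := exists s, l2_norm2 u s.

Definition Jop (d : Z -> Cx) (u : Z -> Cx) : Z -> Cx :=
  fun n => Cadd (Cadd (u (n - 1)%Z) (Cmul (d n) (u n))) (u (n + 1)%Z).

Definition inner (v u : Z -> Cx) (z : Cx) : Prop :=
  CsumZ (fun n => Cmul (v n) (Cconj (u n))) z.

Definition NumRange (d : Z -> Cx) (z : Cx) : Prop :=
  exists u, l2_norm2 u 1 /\ inner (Jop d u) u z.

Definition is_eigenvalue (d : Z -> Cx) (lam : Cx) : Prop :=
  exists u, in_l2 u /\ (exists n, u n <> C0) /\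
    forall n, Jop d u n = Cmul lam (u n).

Definition in_closure (S : Cx -> Prop) (z : Cx) : Prop :=
  forall eps, 0 < eps -> exists w, S w /\ Cnorm (Csub w z) < eps.
Definition in_interior (S : Cx -> Prop) (z : Cx) : Prop :=
  exists eps, 0 < eps /\ forall w, Cnorm (Csub w z) < eps -> S w.
Definition in_boundary (S : Cx -> Prop) (z : Cx) : Prop :=
  in_closure S z /\ ~ in_interior S z.

Definition boundary_eigenvalue (d : Z -> Cx) (lam : Cx) : Prop :=
  is_eigenvalue d lam /\ in_boundary (NumRange d) lam.

Definition bounded_seq (d : Z -> Cx) : Prop := exists M, forall n, Cnorm (d n) <= M.

(* Main.v *)
Require Import Defs.
From Stdlib Require Import Reals ZArith Lra Lia Classical.
Open Scope R_scope.

Lemma isum_lin a b la lb p q :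
  infinite_sum a la -> infinite_sum b lb ->
  infinite_sum (fun k => p * a k + q * b k) (p * la + q * lb).
Proof.
  intros Ha Hb.
  assert (E : forall n, sum_f_R0 (fun k => p * a k + q * b k) n =
                      p * sum_f_R0 a n + q * sum_f_R0 b n).
  { induction n; simpl; [ring|rewrite IHn; ring]. }
  assert (Hc : forall c, Un_cv (fun _ : nat => c) c).
  { intros c eps He; exists 0%nat; intros; unfold Rdist; rewrite Rminus_diag, Rabs_R0; lra. }
  intros eps He.
  assert (H := CV_plus _ _ _ _ (CV_mult _ _ _ _ (Hc p) Ha) (CV_mult _ _ _ _ (Hc q) Hb) eps He).
  destruct H as [N HN]; exists N; intros n Hn; rewrite E; apply HN; auto.
Qed.

Lemma isum_ext a b l : (forall k, a k = b k) -> infinite_sum a l -> infinite_sum b l.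
Proof.
  intros E H eps He; destruct (H eps He) as [N HN]; exists N; intros n Hn.
  replace (sum_f_R0 b n) with (sum_f_R0 a n); auto.
  clear -E; induction n; simpl; rewrite ?IHn, ?E; auto.
Qed.

Lemma isum_single a k0 : (forall k, k <> k0 -> a k = 0) -> infinite_sum a (a k0).
Proof.
  intros H.
  assert (E : forall n, (n >= k0)%nat -> sum_f_R0 a n = a k0).
  { assert (E0 : forall n, (n < k0)%nat -> sum_f_R0 a n = 0).
    { induction n; intros; simpl. apply H; lia. rewrite IHn by lia; rewrite H by lia; ring. }
    induction n; intros Hn.
    - assert (k0 = 0%nat) by lia; subst; reflexivity.
    - destruct (Nat.eq_dec (S n) k0).
      + subst. simpl. rewrite E0 by lia. ring.
      + simpl. rewrite IHn by lia. rewrite (H (S n)) by lia. ring. }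
  intros eps He; exists k0; intros n Hn; rewrite E by lia; unfold Rdist;
  rewrite Rminus_diag, Rabs_R0; lra.
Qed.

Lemma sumZ_lin f g a b p q : sumZ f a -> sumZ g b ->
  sumZ (fun n => p * f n + q * g n) (p * a + q * b).
Proof.
  intros [a1 [a2 [H1 [H2 ->]]]] [b1 [b2 [K1 [K2 ->]]]].
  exists (p*a1+q*b1), (p*a2+q*b2); split; [|split].
  - apply (isum_lin _ _ _ _ p q H1 K1).
  - apply (isum_lin _ _ _ _ p q H2 K2).
  - ring.
Qed.

Lemma sumZ_ext f g a : (forall n, f n = g n) -> sumZ f a -> sumZ g a.
Proof.
  intros E [a1 [a2 [H1 [H2 ->]]]]; exists a1, a2; split; [|split]; auto;
  eapply isum_ext; eauto; intros; simpl; auto.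
Qed.

Lemma isum_single' a k0 l : a k0 = l -> (forall k, k <> k0 -> a k = 0) -> infinite_sum a l.
Proof. intros <-; apply isum_single. Qed.

Lemma sumZ_single k r : sumZ (fun n => if Z.eq_dec n k then r else 0) r.
Proof.
  destruct (Z_le_gt_dec 0 k).
  - exists r, 0; split; [|split; [|ring]].
    + apply (isum_single' _ (Z.to_nat k)).
      * cbv beta. destruct Z.eq_dec; auto; lia.
      * intros j Hj; cbv beta; destruct Z.eq_dec; auto; lia.
    + apply (isum_single' _ 0%nat).
      * cbv beta. destruct Z.eq_dec; auto; lia.
      * intros j Hj; cbv beta; destruct Z.eq_dec; auto; lia.
  - exists 0, r; split; [|split; [|ring]].
    + apply (isum_single' _ 0%nat).
      * cbv beta. destruct Z.eq_dec; auto; lia.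
      * intros j Hj; cbv beta; destruct Z.eq_dec; auto; lia.
    + apply (isum_single' _ (Z.to_nat (- k - 1))).
      * cbv beta. destruct Z.eq_dec; auto; lia.
      * intros j Hj; cbv beta; destruct Z.eq_dec; auto; lia.
Qed.

Lemma sumZ_lin' f g a b p q c h : sumZ f a -> sumZ g b -> c = p * a + q * b ->
  (forall n, h n = p * f n + q * g n) -> sumZ h c.
Proof. intros H K -> E; eapply sumZ_ext; [|apply (sumZ_lin _ _ _ _ p q H K)]; intros; auto. Qed.

Lemma Cx_eq z w : Re z = Re w -> Im z = Im w -> z = w.
Proof. destruct z, w; simpl; intros -> ->; auto. Qed.

Definition delta (k : Z) (c : Cx) (n : Z) : Cx := if Z.eq_dec n k then c else C0.

Lemma CsumZ_ext f g z : (forall n, f n = g n) -> CsumZ f z -> CsumZ g z.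
Proof. intros E [H1 H2]; split; eapply sumZ_ext; eauto; intros; simpl; rewrite E; auto. Qed.

Lemma CsumZ_add f g a b : CsumZ f a -> CsumZ g b ->
  CsumZ (fun n => Cadd (f n) (g n)) (Cadd a b).
Proof.
  intros [H1 H2] [K1 K2]; split; simpl.
  - apply (sumZ_lin' _ _ _ _ 1 1 _ _ H1 K1); intros; ring.
  - apply (sumZ_lin' _ _ _ _ 1 1 _ _ H2 K2); intros; ring.
Qed.

Lemma CsumZ_add' f g a b c : CsumZ f a -> CsumZ g b -> c = Cadd a b ->
  CsumZ (fun n => Cadd (f n) (g n)) c.
Proof. intros; subst; apply CsumZ_add; auto. Qed.

Lemma CsumZ_scal c f a : CsumZ f a -> CsumZ (fun n => Cmul c (f n)) (Cmul c a).
Proof.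
  intros [H1 H2]; split; simpl.
  - apply (sumZ_lin' _ _ _ _ (Re c) (- Im c) _ _ H1 H2); intros; ring.
  - apply (sumZ_lin' _ _ _ _ (Re c) (Im c) _ _ H2 H1); intros; ring.
Qed.

Lemma CsumZ_delta k c : CsumZ (delta k c) c.
Proof.
  split; (eapply sumZ_ext; [|apply sumZ_single with (k := k)]); intros n; unfold delta;
  destruct Z.eq_dec; simpl; auto.
Qed.

Definition IP (x y : Z -> Cx) (z : Cx) : Prop :=
  CsumZ (fun n => Cmul (x n) (Cconj (y n))) z.

Lemma IP_ext x y x' y' z z' : (forall n, x n = x' n) -> (forall n, y n = y' n) -> z = z' ->
  IP x y z -> IP x' y' z'.
Proof. intros E F <-; apply CsumZ_ext; intros; rewrite E, F; auto. Qed.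

Lemma IP_addl x1 x2 y z1 z2 : IP x1 y z1 -> IP x2 y z2 ->
  IP (fun n => Cadd (x1 n) (x2 n)) y (Cadd z1 z2).
Proof.
  intros H K; eapply CsumZ_ext; [|apply (CsumZ_add _ _ _ _ H K)]; intros; apply Cx_eq; simpl; ring.
Qed.

Lemma IP_addr x y1 y2 z1 z2 : IP x y1 z1 -> IP x y2 z2 ->
  IP x (fun n => Cadd (y1 n) (y2 n)) (Cadd z1 z2).
Proof.
  intros H K; eapply CsumZ_ext; [|apply (CsumZ_add _ _ _ _ H K)]; intros; apply Cx_eq; simpl; ring.
Qed.

Lemma IP_scall c x y z : IP x y z -> IP (fun n => Cmul c (x n)) y (Cmul c z).
Proof.
  intros H; eapply CsumZ_ext; [|apply (CsumZ_scal c _ _ H)]; intros; apply Cx_eq; simpl; ring.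
Qed.

Lemma IP_scalr c x y z : IP x y z -> IP x (fun n => Cmul c (y n)) (Cmul (Cconj c) z).
Proof.
  intros H; eapply CsumZ_ext; [|apply (CsumZ_scal (Cconj c) _ _ H)]; intros; apply Cx_eq; simpl; ring.
Qed.

Lemma IP_deltal k c y : IP (delta k c) y (Cmul c (Cconj (y k))).
Proof.
  eapply CsumZ_ext; [|apply (CsumZ_delta k)]; intros n; unfold delta; destruct Z.eq_dec;
  subst; auto; apply Cx_eq; simpl; ring.
Qed.

Lemma IP_deltar k c x : IP x (delta k c) (Cmul (x k) (Cconj c)).
Proof.
  eapply CsumZ_ext; [|apply (CsumZ_delta k)]; intros n; unfold delta; destruct Z.eq_dec;
  subst; auto; apply Cx_eq; simpl; ring.
Qed.

Lemma Jop_delta d k c n :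
  Jop d (delta k c) n = Cadd (Cadd (delta (k+1) c n) (delta k (Cmul (d k) c) n)) (delta (k-1) c n).
Proof.
  unfold Jop, delta.
  destruct (Z.eq_dec (n-1) k), (Z.eq_dec n (k+1)), (Z.eq_dec n k), (Z.eq_dec (n+1) k),
    (Z.eq_dec n (k-1)); try lia; subst; apply Cx_eq; simpl; ring.
Qed.

Lemma Jop_lin d x y a b n :
  Jop d (fun k => Cadd (Cmul a (x k)) (Cmul b (y k))) n =
  Cadd (Cmul a (Jop d x n)) (Cmul b (Jop d y n)).
Proof. unfold Jop; apply Cx_eq; simpl; ring. Qed.

Lemma Jop_add d x y n : Jop d (fun k => Cadd (x k) (y k)) n = Cadd (Jop d x n) (Jop d y n).
Proof. unfold Jop; apply Cx_eq; simpl; ring. Qed.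

Lemma Cnorm2_ge0 z : 0 <= Cnorm2 z.
Proof. unfold Cnorm2; nra. Qed.

Lemma Cnorm2_pos z : z <> C0 -> 0 < Cnorm2 z.
Proof.
  intros H. destruct z as [x y]; unfold Cnorm2; simpl.
  destruct (Req_dec x 0), (Req_dec y 0); subst.
  - exfalso; apply H; reflexivity.
  - assert (0 < y^2) by (apply pow_lt_0 || nra); nra.
  - nra.
  - nra.
Qed.

Lemma isum_ge a l : (forall k, 0 <= a k) -> infinite_sum a l ->
  (forall k, a k <= l) /\ 0 <= l.
Proof.
  intros Hp H.
  assert (G : forall n, sum_f_R0 a n <= l).
  { apply growing_ineq; [intros n; simpl; specialize (Hp (S n)); lra|exact H]. }
  assert (P : forall n, 0 <= sum_f_R0 a n).
  { induction n; simpl; [apply Hp|specialize (Hp (S n)); lra]. }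
  split.
  - intros k. specialize (G k). destruct k; simpl in *; auto.
    specialize (P k); lra.
  - specialize (G 0%nat); specialize (P 0%nat); lra.
Qed.

Lemma sumZ_pos f S n0 : (forall n, 0 <= f n) -> 0 < f n0 -> sumZ f S -> 0 < S.
Proof.
  intros Hp Hn [l1 [l2 [H1 [H2 ->]]]].
  destruct (isum_ge _ _ (fun k => Hp _) H1) as [G1 P1].
  destruct (isum_ge _ _ (fun k => Hp _) H2) as [G2 P2].
  destruct (Z_le_gt_dec 0 n0).
  - specialize (G1 (Z.to_nat n0)); cbv beta in G1; rewrite Z2Nat.id in G1 by lia; lra.
  - specialize (G2 (Z.to_nat (- n0 - 1))); cbv beta in G2.
    replace (- Z.of_nat (S (Z.to_nat (- n0 - 1))))%Z with n0 in G2 by lia; lra.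
Qed.

Lemma isum_terms a l : infinite_sum a l -> forall eps, 0 < eps ->
  exists N, forall n, (n >= N)%nat -> Rabs (a (S n)) < eps.
Proof.
  intros H eps He. destruct (H (eps/2)) as [N HN]; [lra|].
  exists N; intros n Hn.
  assert (A1 := HN n Hn). assert (A2 := HN (S n) ltac:(lia)).
  unfold Rdist in *; simpl in A2.
  replace (a (S n)) with ((sum_f_R0 a n + a (S n) - l) - (sum_f_R0 a n - l)) by ring.
  eapply Rle_lt_trans; [apply Rabs_triang|]. rewrite Rabs_Ropp. lra.
Qed.

Definition eigen (d : Z -> Cx) (lam : Cx) (u : Z -> Cx) := forall n, Jop d u n = Cmul lam (u n).

Lemma parity_chain d lam u b n0 :
  eigen d lam u -> (forall n, Z.even n = b -> u n = C0) -> Z.even n0 = negb b ->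
  forall j : nat, Cnorm2 (u (n0 + 2 * Z.of_nat j)%Z) = Cnorm2 (u n0).
Proof.
  intros He Hz Hn0. induction j.
  - simpl; rewrite Z.add_0_r; auto.
  - rewrite <- IHj. set (n1 := (n0 + 2 * Z.of_nat j)%Z).
    assert (Hp : Z.even (n1 + 1) = b).
    { unfold n1. rewrite <- Z.add_assoc, (Z.add_comm (2 * _)), Z.add_assoc, Z.even_add_mul_2.
      rewrite Z.even_add, Hn0. destruct b; reflexivity. }
    assert (E := He (n1+1)%Z). rewrite (Hz _ Hp) in E.
    unfold Jop in E. rewrite (Hz _ Hp) in E.
    replace (n1 + 1 - 1)%Z with n1 in E by lia.
    replace (n1 + 1 + 1)%Z with (n0 + 2 * Z.of_nat (S j))%Z in E by (unfold n1; lia).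
    set (n2 := (n0 + 2 * Z.of_nat (S j))%Z) in *.
    assert (R1 := f_equal Re E); assert (I1 := f_equal Im E); simpl in R1, I1.
    unfold Cnorm2.
    replace (Re (u n2)) with (- Re (u n1)) by lra.
    replace (Im (u n2)) with (- Im (u n1)) by lra. ring.
Qed.

Lemma parity_nonzero d lam u b n0 :
  eigen d lam u -> in_l2 u -> u n0 <> C0 -> exists m, Z.even m = b /\ u m <> C0.
Proof.
  intros He [SS [l1 [l2 [H1 [H2 HS]]]]] Hn0.
  apply NNPP; intros Hc.
  assert (Hz : forall n, Z.even n = b -> u n = C0).
  { intros n Hn; apply NNPP; intros Hu; apply Hc; eauto. }
  assert (Hb : Z.even n0 = negb b).
  { destruct (Z.even n0) eqn:E, b; auto; exfalso; apply Hn0; apply Hz; auto. }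
  assert (C := parity_chain _ _ _ _ _ He Hz Hb).
  assert (Cp := Cnorm2_pos _ Hn0).
  destruct (isum_terms _ _ H1 _ Cp) as [N HN].
  set (j := (N + 1 + Z.abs_nat n0)%nat).
  specialize (C j). specialize (HN (Z.to_nat (n0 + 2 * Z.of_nat j) - 1)%nat ltac:(unfold j; lia)).
  replace (S (Z.to_nat (n0 + 2 * Z.of_nat j) - 1)) with (Z.to_nat (n0 + 2 * Z.of_nat j)) in HN
    by (unfold j; lia).
  rewrite Z2Nat.id in HN by (unfold j; lia).
  rewrite C, Rabs_right in HN by lra. lra.
Qed.

Lemma combine d lam u e S A A' E' c mu al be :
  eigen d lam u -> IP u u (mkC S 0) -> IP u e A -> IP e u A' -> IP e e E' ->
  IP (Jop d e) u c -> IP (Jop d e) e mu ->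
  IP (fun n => Cadd (Cmul al (u n)) (Cmul be (e n))) (fun n => Cadd (Cmul al (u n)) (Cmul be (e n)))
    (Cadd (Cmul al (Cadd (Cmul (Cconj al) (mkC S 0)) (Cmul (Cconj be) A)))
          (Cmul be (Cadd (Cmul (Cconj al) A') (Cmul (Cconj be) E')))) /\
  IP (Jop d (fun n => Cadd (Cmul al (u n)) (Cmul be (e n))))
     (fun n => Cadd (Cmul al (u n)) (Cmul be (e n)))
    (Cadd (Cmul (Cmul al lam) (Cadd (Cmul (Cconj al) (mkC S 0)) (Cmul (Cconj be) A)))
          (Cmul be (Cadd (Cmul (Cconj al) c) (Cmul (Cconj be) mu)))).
Proof.
  intros He IU Iue Ieu Iee IJu IJe. split.
  - apply IP_addl; apply IP_scall; apply IP_addr; apply IP_scalr; auto.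
  - eapply IP_ext with (x := fun n => Cadd (Cmul (Cmul al lam) (u n)) (Cmul be (Jop d e n)));
      [| intros; reflexivity | reflexivity |].
    + intros n. rewrite Jop_lin, He. apply Cx_eq; simpl; ring.
    + apply IP_addl; apply IP_scall; apply IP_addr; apply IP_scalr; auto.
Qed.

Lemma final_alg (S E Nc x : R) (lam c mu w : Cx) :
  0 < S -> 0 < E -> Nc = Cnorm2 c -> 0 < Nc -> 0 <= x < 1 -> x < 1 ->
  let P1 := (Re w - Re lam) - x * (Re mu / E - Re lam) in
  let P2 := (Im w - Im lam) - x * (Im mu / E - Im lam) in
  P1 ^ 2 + P2 ^ 2 = x * (1 - x) * Nc / (S * E) ->
  let a := sqrt ((1 - x) / S) in
  let b := mkC ((P1 * Re c + P2 * Im c) / (a * Nc)) ((P2 * Re c - P1 * Im c) / (a * Nc)) in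
  a * a * S + Cnorm2 b * E = 1 /\
  Cadd (Cmul (Cmul (mkC a 0) lam) (Cadd (Cmul (Cconj (mkC a 0)) (mkC S 0)) (Cmul (Cconj b) C0)))
       (Cmul b (Cadd (Cmul (Cconj (mkC a 0)) c) (Cmul (Cconj b) mu))) = w.
Proof.
  intros HS HE HN HNp Hx Hx1 P1 P2 HP a b.
  assert (Ha2 : a * a = (1 - x) / S) by (apply sqrt_sqrt; apply Rlt_le, Rdiv_lt_0_compat; lra).
  assert (Ha : 0 < a) by (apply sqrt_lt_R0; apply Rdiv_lt_0_compat; lra).
  assert (Hc2 : Re c ^ 2 + Im c ^ 2 <> 0) by (unfold Cnorm2 in HN; lra).
  assert (Ha0 : a <> 0) by lra.
  assert (Hb : Cnorm2 b = x / E).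
  { unfold b, Cnorm2; simpl.
    assert (HNc : Nc = Re c ^ 2 + Im c ^ 2) by (rewrite HN; reflexivity).
    transitivity ((P1 ^ 2 + P2 ^ 2) * Nc / (a * a * Nc * Nc)).
    - rewrite HNc. field. split; [|lra]. rewrite <- HNc; lra.
    - rewrite HP, Ha2. field. repeat split; lra. }
  assert (Hbc1 : Re b * Re c - Im b * Im c = P1 / a).
  { unfold b; simpl. rewrite HN; unfold Cnorm2. field; repeat split; auto. }
  assert (Hbc2 : Re b * Im c + Im b * Re c = P2 / a).
  { unfold b; simpl. rewrite HN; unfold Cnorm2. field; repeat split; auto. }
  split.
  - rewrite Ha2, Hb. field. lra.
  - assert (Hb2 : Re b * Re b + Im b * Im b = x / E) by (rewrite <- Hb; unfold Cnorm2; ring).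
    clearbody b. apply Cx_eq; simpl.
    + transitivity (a * a * S * Re lam + a * (Re b * Re c - Im b * Im c)
                    + (Re b * Re b + Im b * Im b) * Re mu); [ring|].
      rewrite Hbc1, Hb2, Ha2. unfold P1. field. lra.
    + transitivity (a * a * S * Im lam + a * (Re b * Im c + Im b * Re c)
                    + (Re b * Re b + Im b * Im b) * Im mu); [ring|].
      rewrite Hbc2, Hb2, Ha2. unfold P2. field. lra.
Qed.

Definition em (u : Z -> Cx) (m' : Z) := Cconj (u m').
Definition em' (u : Z -> Cx) (m : Z) := mkC (- Re (u m)) (Im (u m)).
Definition evec (u : Z -> Cx) (m m' : Z) := fun n => Cadd (delta m (em u m') n) (delta m' (em' u m) n).

Lemma Iue u m m' : IP u (evec u m m') C0.
Proof.
  eapply IP_ext; [intros; reflexivity|intros; reflexivity| |apply IP_addr; apply IP_deltar].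
  unfold em, em'; apply Cx_eq; simpl; ring.
Qed.

Lemma Ieu u m m' : IP (evec u m m') u C0.
Proof.
  eapply IP_ext; [intros; reflexivity|intros; reflexivity| |apply IP_addl; apply IP_deltal].
  unfold em, em'; apply Cx_eq; simpl; ring.
Qed.

Lemma Iee u m m' : m <> m' -> IP (evec u m m') (evec u m m') (mkC (Cnorm2 (u m) + Cnorm2 (u m')) 0).
Proof.
  intros Hm.
  eapply IP_ext; [intros; reflexivity|intros; reflexivity| |apply IP_addl; apply IP_deltal].
  unfold evec, delta. destruct (Z.eq_dec m m); [|congruence].
  destruct (Z.eq_dec m m'); [congruence|]. destruct (Z.eq_dec m' m); [congruence|].
  destruct (Z.eq_dec m' m'); [|congruence].
  unfold em, em', Cnorm2; apply Cx_eq; simpl; ring.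
Qed.

Definition Jval (d u : Z -> Cx) (m m' : Z) (y : Z -> Cx) :=
  Cadd (Cadd (Cadd (Cmul (em u m') (Cconj (y (m+1)%Z))) (Cmul (Cmul (d m) (em u m')) (Cconj (y m))))
             (Cmul (em u m') (Cconj (y (m-1)%Z))))
       (Cadd (Cadd (Cmul (em' u m) (Cconj (y (m'+1)%Z))) (Cmul (Cmul (d m') (em' u m)) (Cconj (y m'))))
             (Cmul (em' u m) (Cconj (y (m'-1)%Z)))).

Lemma IJ d u m m' y : IP (Jop d (evec u m m')) y (Jval d u m m' y).
Proof.
  eapply IP_ext; [| intros; reflexivity | reflexivity |].
  2:{ apply IP_addl; (apply IP_addl; [apply IP_addl|]); apply IP_deltal. }
  intros n. cbv beta. unfold evec. rewrite Jop_add, !Jop_delta. reflexivity.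
Qed.

Lemma c_form d lam u m m' b1 b2 : eigen d lam u -> Im (d m) = b1 -> Im (d m') = b2 ->
  Jval d u m m' u = Cmul (mkC 0 (2 * (b1 - b2))) (Cconj (Cmul (u m) (u m'))).
Proof.
  intros He H1 H2.
  assert (E1 := He m); assert (E2 := He m'); unfold Jop in E1, E2.
  assert (R1 := f_equal Re E1); assert (I1 := f_equal Im E1);
  assert (R2 := f_equal Re E2); assert (I2 := f_equal Im E2); simpl in R1, I1, R2, I2.
  unfold Jval, em, em'. apply Cx_eq; simpl.
  - replace (Re (u (m+1)%Z)) with (Re lam * Re (u m) - Im lam * Im (u m) - Re (u (m-1)%Z)
        - (Re (d m) * Re (u m) - Im (d m) * Im (u m))) by lra.
    replace (Re (u (m'+1)%Z)) with (Re lam * Re (u m') - Im lam * Im (u m') - Re (u (m'-1)%Z)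
        - (Re (d m') * Re (u m') - Im (d m') * Im (u m'))) by lra.
    replace (Im (u (m+1)%Z)) with (Re lam * Im (u m) + Im lam * Re (u m) - Im (u (m-1)%Z)
        - (Re (d m) * Im (u m) + Im (d m) * Re (u m))) by lra.
    replace (Im (u (m'+1)%Z)) with (Re lam * Im (u m') + Im lam * Re (u m') - Im (u (m'-1)%Z)
        - (Re (d m') * Im (u m') + Im (d m') * Re (u m'))) by lra.
    rewrite <- H1, <- H2. ring.
  - replace (Re (u (m+1)%Z)) with (Re lam * Re (u m) - Im lam * Im (u m) - Re (u (m-1)%Z)
        - (Re (d m) * Re (u m) - Im (d m) * Im (u m))) by lra.
    replace (Re (u (m'+1)%Z)) with (Re lam * Re (u m') - Im lam * Im (u m') - Re (u (m'-1)%Z)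
        - (Re (d m') * Re (u m') - Im (d m') * Im (u m'))) by lra.
    replace (Im (u (m+1)%Z)) with (Re lam * Im (u m) + Im lam * Re (u m) - Im (u (m-1)%Z)
        - (Re (d m) * Im (u m) + Im (d m) * Re (u m))) by lra.
    replace (Im (u (m'+1)%Z)) with (Re lam * Im (u m') + Im lam * Re (u m') - Im (u (m'-1)%Z)
        - (Re (d m') * Im (u m') + Im (d m') * Re (u m'))) by lra.
    rewrite <- H1, <- H2. ring.
Qed.

Lemma Cnorm2_mul x y : Cnorm2 (Cmul x y) = Cnorm2 x * Cnorm2 y.
Proof. unfold Cnorm2; simpl; ring. Qed.

Lemma Cnorm2_conj x : Cnorm2 (Cconj x) = Cnorm2 x.
Proof. unfold Cnorm2; simpl; ring. Qed.

Lemma ReCC z : Re (Cmul z (Cconj z)) = Cnorm2 z.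
Proof. unfold Cnorm2; simpl; ring. Qed.

Theorem mainTheorem10 (d : Z -> Cx) (b1 b2 : R) :
  bounded_seq d ->
  b1 <> b2 ->
  (forall n : Z, Z.even n = true -> Im (d n) = b1) ->
  (forall n : Z, Z.even n = false -> Im (d n) = b2) ->
  forall lam : Cx, ~ boundary_eigenvalue d lam.
Proof.
  intros _ Hb12 Hev Hod lam [[u [Hl2 [[n0 Hn0] Heig]]] [_ Hnint]].
  apply Hnint.
  assert (He : eigen d lam u) by exact Heig.
  destruct (parity_nonzero _ _ _ true _ He Hl2 Hn0) as [m [Hm Hum]].
  destruct (parity_nonzero _ _ _ false _ He Hl2 Hn0) as [m' [Hm' Hum']].
  assert (Hmm : m <> m') by (intro; subst; congruence).
  destruct Hl2 as [S HS].
  assert (HSp : 0 < S) by (apply (sumZ_pos _ _ n0 (fun n => Cnorm2_ge0 _) (Cnorm2_pos _ Hn0) HS)).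
  assert (IU : IP u u (mkC S 0)).
  { split; simpl.
    - eapply sumZ_ext; [|exact HS]; intros; unfold Cnorm2; simpl; ring.
    - apply (sumZ_lin' _ _ _ _ 0 0 _ _ HS HS); [ring|intros; simpl; ring]. }
  set (E0 := Cnorm2 (u m) + Cnorm2 (u m')).
  assert (HE : 0 < E0) by (unfold E0; assert (H := Cnorm2_pos _ Hum); assert (H' := Cnorm2_pos _ Hum'); lra).
  set (c := Jval d u m m' u).
  set (mu := Jval d u m m' (evec u m m')).
  assert (Hc : c = Cmul (mkC 0 (2 * (b1 - b2))) (Cconj (Cmul (u m) (u m'))))
    by (apply (c_form d lam); auto).
  set (Nc := Cnorm2 c).
  assert (HNc : 0 < Nc).
  { unfold Nc; rewrite Hc, Cnorm2_mul, Cnorm2_conj, Cnorm2_mul.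
    assert (H := Cnorm2_pos _ Hum); assert (H' := Cnorm2_pos _ Hum').
    assert (0 < Cnorm2 (mkC 0 (2 * (b1 - b2)))).
    { unfold Cnorm2; simpl. assert (b1 - b2 <> 0) by lra.
      destruct (Rlt_or_le b1 b2); nra. }
    apply Rmult_lt_0_compat; auto; apply Rmult_lt_0_compat; auto. }
  set (K := Nc / (S * E0)).
  assert (HK : 0 < K) by (unfold K; apply Rdiv_lt_0_compat; nra).
  set (D1 := Re mu / E0 - Re lam). set (D2 := Im mu / E0 - Im lam).
  set (M := D1 ^ 2 + D2 ^ 2).
  assert (HM : 0 <= M) by (unfold M; nra).
  set (dl := Rmin (1/2) (K / (8 * M + 8))).
  assert (Hdl1 : dl <= 1/2) by apply Rmin_l.
  assert (Hdl2 : dl * (8 * M + 8) <= K).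
  { assert (H := Rmin_r (1/2) (K / (8 * M + 8))). fold dl in H.
    apply Rmult_le_compat_r with (r := 8 * M + 8) in H; [|lra].
    unfold Rdiv in H; rewrite Rmult_assoc, Rinv_l, Rmult_1_r in H; lra. }
  assert (Hdl0 : 0 < dl).
  { unfold dl; apply Rmin_pos; [lra|apply Rdiv_lt_0_compat; lra]. }
  exists (sqrt (dl * K / 8)). split; [apply sqrt_lt_R0; nra|].
  intros w Hw.
  set (p1 := Re w - Re lam). set (p2 := Im w - Im lam).
  assert (Hp : p1 ^ 2 + p2 ^ 2 < dl * K / 8).
  { apply sqrt_lt_0_alt. exact Hw. }
  assert (Hx : exists x, 0 <= x < 1 /\
     ((Re w - Re lam) - x * (Re mu / E0 - Re lam)) ^ 2 +
     ((Im w - Im lam) - x * (Im mu / E0 - Im lam)) ^ 2 = x * (1 - x) * Nc / (S * E0)).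
  { destruct (Req_dec (p1 ^ 2 + p2 ^ 2) 0) as [Z0|Z0].
    - exists 0; split; [lra|]. fold p1 p2. replace (0 * (1 - 0) * Nc / (S * E0)) with 0 by (field; nra).
      transitivity (p1 ^ 2 + p2 ^ 2); [ring|exact Z0].
    - set (h := fun x => x * (1 - x) * K - ((p1 - x * D1) ^ 2 + (p2 - x * D2) ^ 2)).
      assert (Hh : continuity h) by (unfold h; reg).
      assert (H0 : h 0 < 0) by (unfold h; assert (0 <= p1^2 + p2^2) by nra; lra).
      assert (Hd : 0 < h dl).
      { unfold h.
        assert (A1 : (p1 - dl * D1) ^ 2 <= 2 * p1 ^ 2 + 2 * (dl ^ 2 * D1 ^ 2)).
        { assert (0 <= (p1 + dl * D1) ^ 2) by apply pow2_ge_0. nra. }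
        assert (A2 : (p2 - dl * D2) ^ 2 <= 2 * p2 ^ 2 + 2 * (dl ^ 2 * D2 ^ 2)).
        { assert (0 <= (p2 + dl * D2) ^ 2) by apply pow2_ge_0. nra. }
        assert (A3 : 2 * dl ^ 2 * M <= dl * K / 4).
        { assert (dl * M * 8 <= K) by nra. nra. }
        assert (A4 : dl * (1 - dl) * K >= dl * K / 2) by nra.
        unfold M in A3. lra. }
      destruct (IVT h 0 dl Hh Hdl0 H0 Hd) as [x [Hxr Hx0]].
      exists x; split; [lra|]. unfold h in Hx0. fold p1 p2. fold D1 D2.
      unfold K in Hx0. lra. }
  destruct Hx as [x [Hx01 Hxe]].
  destruct (final_alg S E0 Nc x lam c mu w HSp HE eq_refl HNc Hx01 ltac:(lra) Hxe) as [Hn Hq].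
  set (a := sqrt ((1 - x) / S)) in *.
  set (b := mkC _ _) in Hn, Hq.
  destruct (combine d lam u (evec u m m') S C0 C0 (mkC E0 0) c mu (mkC a 0) b He IU
             (Iue u m m') (Ieu u m m') (Iee u m m' Hmm) (IJ d u m m' u) (IJ d u m m' _))
    as [Vn Vq].
  clearbody a b.
  exists (fun n => Cadd (Cmul (mkC a 0) (u n)) (Cmul b (evec u m m' n))). split.
  - destruct Vn as [VR _]. unfold l2_norm2.
    eapply sumZ_ext; [|eapply sumZ_lin' with (p := 1) (q := 0); [exact VR|exact VR| |intros; reflexivity]].
    + intros n; cbv beta. rewrite ReCC. ring.
    + transitivity (a * a * S + Cnorm2 b * E0); [symmetry; exact Hn|unfold Cnorm2; simpl; ring].
  - rewrite <- Hq. exact Vq.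
Qed.
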